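(* Let $F$ be a digraph and let $a$ be an arc of $F$. If $F-a$ is $\vec{\chi}$-maderian, then $F$ is $\vec{\chi}$-maderian and $\mathrm{mad}_{\vec{\chi}}(F)\le 4\cdot\mathrm{mad}_{\vec{\chi}}(F-a)-3$.
   Context: $\vec{\chi}(D)$, the dichromatic number, is the least $k$ such that $V(D)$ can be partitioned into $k$ sets each inducing an acyclic subdigraph. A subdivision of $F$ is obtained by replacing each arc $(x,y)$ by a directed $(x,y)$-path, internally disjoint with new internal vertices. $F$ is $\vec{\chi}$-maderian if there is an integer $c$ such that every digraph $D$ with $\vec{\chi}(D)\ge c$ contains a subdivision of $F$ as a subdigraph; $\mathrm{mad}_{\vec{\chi}}(F)$ is the least such $c$. *)

(* Defs.v *)
From mathcomp Require Import all_boot.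
Set Implicit Arguments. Unset Strict Implicit. Unset Printing Implicit Defensive.

(* A digraph (V, E): loopless (digons allowed, no parallel arcs). *)
Definition loopless (V : finType) (E : rel V) : Prop := irreflexive E.

(* S induces an acyclic subdigraph: no directed cycle all of whose vertices are in S.
   [cycle E c] with c = x :: p means x -> p1 -> ... -> pn -> x. *)
Definition acyclic_in (V : finType) (E : rel V) (S : pred V) : Prop :=
  forall c : seq V, c != [::] -> all S c -> ~~ cycle E c.

Definition dicolorable (V : finType) (E : rel V) (k : nat) : Prop :=
  exists f : V -> 'I_k, forall i : 'I_k, acyclic_in E (fun v => f v == i).

Definition dichrom_ge (V : finType) (E : rel V) (c : nat) : Prop :=
  forall k, dicolorable E k -> c <= k.

Definition contains_subdivision (VF : finType) (EF : rel VF)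
    (V : finType) (E : rel V) : Prop :=
  exists (phi : VF -> V) (P : VF -> VF -> seq V),
    injective phi /\
    (forall x y, EF x y ->
       [/\ path E (phi x) (rcons (P x y) (phi y)),
           uniq (P x y) &
           forall z, z \in P x y -> forall w, z != phi w]) /\
    (forall x y x' y', EF x y -> EF x' y' -> (x, y) != (x', y') ->
       forall z, z \in P x y -> z \notin P x' y').

Definition mad_bound (VF : finType) (EF : rel VF) (c : nat) : Prop :=
  forall (V : finType) (E : rel V), loopless E -> dichrom_ge E c ->
    contains_subdivision EF E.

Definition maderian (VF : finType) (EF : rel VF) : Prop :=
  exists c, mad_bound EF c.

Definition is_mad (VF : finType) (EF : rel VF) (m : nat) : Prop :=
  mad_bound EF m /\ forall c, mad_bound EF c -> m <= c.

Definition del_arc (VF : finType) (EF : rel VF) (a : VF * VF) : rel VF :=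
  fun x y => EF x y && ((x, y) != a).

(* Main.v *)
Require Import Defs.
From mathcomp Require Import all_boot.
From mathcomp Require Import zify.
From Stdlib Require Import Classical IndefiniteDescription.
Set Implicit Arguments. Unset Strict Implicit. Unset Printing Implicit Defensive.

Section Gen.
Variable V : finType.
Implicit Types (e : rel V) (S X Y : pred V).

Definition res e S : rel V := fun x y => [&& S x, S y & e x y].
Definition colorable e S k := exists f : V -> nat,
  (forall v, S v -> f v < k) /\ forall j, acyclic_in e (fun v => S v && (f v == j)).
Definition big e S c := forall k, colorable e S k -> c <= k.
Definition rev_rel e : rel V := fun x y => e y x.

Lemma colorable_mono e S k k' : k <= k' -> colorable e S k -> colorable e S k'.
Proof. move=> le [f [Hf Ha]]; exists f; split=> // v Sv; exact: leq_trans (Hf v Sv) le. Qed.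

Lemma notbig e S c : ~ big e S c -> colorable e S c.-1.
Proof.
move=> nb; apply: NNPP => nc; apply: nb => k ck.
case: (leqP c k) => // lt; case: nc; apply: colorable_mono ck; lia.
Qed.

Lemma acyclic_rev e P : acyclic_in e P -> acyclic_in (rev_rel e) P.
Proof.
move=> H c cn ac; rewrite /rev_rel -rev_cycle; apply: H.
- by move: cn; rewrite -!size_eq0 size_rev.
- by rewrite all_rev.
Qed.

Lemma big_rev e S c : big e S c -> big (rev_rel e) S c.
Proof.
move=> hb k [f [hf ha]]; apply: hb; exists f; split=> // j.
exact: (acyclic_rev (e := rev_rel e)).
Qed.

Lemma connect_res_rev e X x y : connect (res (rev_rel e) X) x y = connect (res e X) y x.
Proof.
have := connect_rev (res e X) x y; rewrite /= => <-; apply: eq_connect => a b /=.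
by rewrite /res /rev_rel /=; case: (X a); case: (X b).
Qed.

Lemma connect_res_sub e X Y x y : (forall z, X z -> Y z) ->
  connect (res e X) x y -> connect (res e Y) x y.
Proof.
move=> XY; apply: connect_sub => a b /and3P[Xa Xb eab]; apply: connect1.
by rewrite /res (XY _ Xa) (XY _ Xb).
Qed.

Lemma path_res e X x p : X x -> all X p -> path e x p -> path (res e X) x p.
Proof.
elim: p x => //= y p IH x Xx /andP[Xy Xp] /andP[exy pp].
by rewrite /res Xx Xy exy /=; exact: IH.
Qed.

Lemma path_res_all e X x p : path (res e X) x p -> all X p.
Proof. by elim: p x => //= y p IH x /andP[/and3P[_ -> _] /IH]. Qed.

Lemma path_res_e e X x p : path (res e X) x p -> path e x p.
Proof. by apply: sub_path => a b /and3P[]. Qed.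

Lemma connect_res_start e S v r : connect (res e S) v r -> S r -> S v.
Proof. by case/connectP=> [[|y p]] /=; [move=> _ -> | case/andP=> /and3P[]]. Qed.

Lemma first_hit e (C : pred V) x p : ~~ C x -> C (last x p) -> path e x p ->
  exists s, C s /\ connect (res e (fun z => (z == s) || ~~ C z)) x s.
Proof.
elim: p x => [|y p IH] x /= nCx; first by rewrite (negbTE nCx).
move=> Cl /andP[exy pp]; case Cy: (C y).
- exists y; split=> //; apply: connect1; by rewrite /res /= nCx eqxx !orbT exy.
- have [s [Cs cs]] := IH y (negbT Cy) Cl pp; exists s; split=> //.
  apply: connect_trans cs; apply: connect1; by rewrite /res /= nCx Cy /= !orbT exy.
Qed.

Definition comp e S t : {set V} :=
  [set w | [&& S w, connect (res e S) t w & connect (res e S) w t]].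

Lemma cycle_connect e S c : all S c -> cycle e c -> all2rel (connect (res e S)) c.
Proof.
move=> Sc cy; rewrite -cycle_all2rel; last exact: connect_trans.
apply: (sub_in_cycle (P := S) (e := e)) => // a b Sa Sb eab; apply: connect1.
by move: Sa Sb; rewrite /res !unfold_in => -> ->.
Qed.


Lemma sc_lemma e S c : 0 < c -> big e S c ->
  exists t, S t /\ big e (fun w => w \in comp e S t) c.
Proof.
move=> c0 hb; apply: NNPP => hn.
have hcol : forall t, S t -> colorable e (fun w => w \in comp e S t) c.-1.
  move=> t St; apply: notbig => hb'; apply: hn; by exists t.
pose Pr (X : {set V}) (g : V -> nat) := (exists t, S t /\ X = comp e S t) ->
  (forall v, v \in X -> g v < c.-1) /\
  forall j, acyclic_in e (fun v => (v \in X) && (g v == j)).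
have [G HG] : exists G : {set V} -> V -> nat, forall Z, Pr Z (G Z).
  apply: (functional_choice (fun Z g => Pr Z g)) => Z.
  case: (classic (exists t, S t /\ Z = comp e S t)) => [[t [St ->]] | nex].
  - have [g hg] := hcol t St; exists g => _; exact: hg.
  - by exists (fun _ => 0) => h; case: (nex h).
have : colorable e S c.-1.
  exists (fun w => G (comp e S w) w); split.
  - move=> w Sw; have [+ _] := HG (comp e S w) (ex_intro _ w (conj Sw erefl)); apply.
    by rewrite inE Sw !connect0.
  - move=> j cs cn ac; apply/negP => cyc.
    case: cs cn ac cyc => [//|x s] cn ac cyc.
    have Sc : all S (x :: s) by apply: sub_all ac => v /andP[].
    have Sx : S x by move: Sc => /andP[].
    have /allrelP cc := cycle_connect Sc cyc.
    have hcomp : forall w, w \in x :: s -> comp e S w = comp e S x /\ w \in comp e S x.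
      move=> w ws; have cxw := cc x w (mem_head _ _) ws.
      have cwx := cc w x ws (mem_head _ _).
      have Sw : S w by move: (allP Sc w ws).
      split; last by rewrite inE Sw cxw cwx.
      apply/setP => z; rewrite !inE; case: (S z) => //=.
      apply/andP/andP => [[h1 h2]|[h1 h2]]; split.
      + exact: connect_trans cxw h1.
      + exact: connect_trans h2 cwx.
      + exact: connect_trans cwx h1.
      + exact: connect_trans h2 cxw.
    have [_ /(_ j (x :: s) cn)] := HG (comp e S x) (ex_intro _ x (conj Sx erefl)).
    move=> hneg; apply/negP: cyc; apply: hneg.
    apply/allP => w ws; have [h1 h2] := hcomp w ws.
    by move: (allP ac w ws) => /andP[_]; rewrite h1 h2.
move/hb; lia.
Qed.

Lemma level_lemma e S S' r c : irreflexive e -> 1 < c -> S r ->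
  (forall v, S' v -> connect (res e S) v r) -> big e S' (2 * c - 1) ->
  exists N : pred V, [/\ forall v, N v -> S' v, ~~ N r, big e N c &
     forall v, N v -> connect (res e (fun w => (w == v) || ~~ N w)) v r].
Proof.
move=> irr c1 Sr hreach hbig.
pose Q v n := ~~ connect (res e S) v r ||
   [exists t : n.-tuple V, path (res e S) v t && (last v t == r)].
have Qex : forall v, exists n, Q v n.
  move=> v; case hc: (connect (res e S) v r); last by exists 0; rewrite /Q hc.
  case/connectP: hc => p pp lp; exists (size p); rewrite /Q; apply/orP; right.
  by apply/existsP; exists (in_tuple p); rewrite /= pp -lp eqxx.
pose l v := ex_minn (Qex v).
have L1 : forall v, connect (res e S) v r ->
    exists p, [/\ path (res e S) v p, last v p = r & size p = l v].
  move=> v cv; rewrite /l; case: ex_minnP => n; rewrite /Q cv /=.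
  by move=> /existsP[t /andP[pt /eqP lt]] _; exists t; rewrite size_tuple.
have L2 : forall v p, path (res e S) v p -> last v p = r -> l v <= size p.
  move=> v p pp lp; rewrite /l; case: ex_minnP => n _; apply.
  by rewrite /Q; apply/orP; right; apply/existsP; exists (in_tuple p); rewrite /= pp lp eqxx.
have L4 : forall v w, res e S v w -> connect (res e S) w r -> l v <= (l w).+1.
  move=> v w vw /L1 [p [pp lp sp]]; rewrite -sp.
  by apply: (L2 v (w :: p)); rewrite /= ?vw.
have L0 : forall v, connect (res e S) v r -> l v = 0 -> v = r.
  move=> v /L1 [[|? ?] [_ lp sp]] lv; first by rewrite -lp.
  by rewrite lv in sp.
have lr : l r = 0.
  by apply/eqP; rewrite -leqn0; apply: (L2 r [::]).
pose N i := fun v => S' v && (l v == i).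
apply: NNPP => hn.
have hcol : forall i, colorable e (N i) c.-1.
  case=> [|i].
    apply: (colorable_mono (k := 1)); first lia.
    exists (fun _ => 0); split=> // j cs cn ac; apply/negP => cyc.
    have allr : forall v, v \in cs -> v = r.
      move=> v vs; move: (allP ac v vs) => /andP[/andP[S'v /eqP lv] _].
      exact: L0 (hreach v S'v) lv.
    case: cs cn ac cyc allr => [//|x s] _ _ /= cyc allr.
    have ex : x = r by apply: allr; rewrite mem_head.
    case: s cyc allr => [|y s] /=; first by rewrite irr.
    move=> /andP[exy _] allr.
    have ey : y = r by apply: allr; rewrite !inE eqxx orbT.
    by move: exy; rewrite ex ey irr.
  apply: notbig => hb; apply: hn; exists (N i.+1); split.
  - by move=> v /andP[].
  - by rewrite /N lr andbF.
  - exact: hb.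
  - move=> v /andP[S'v /eqP lv]; have [p [pp lp sp]] := L1 v (hreach v S'v).
    apply/connectP; exists p => //; apply: path_res (path_res_e pp); first by rewrite eqxx.
    apply/allP => z zp; apply/orP; right; rewrite /N negb_and; apply/orP; right.
    case/splitPr: zp pp lp sp => p1 p2.
    rewrite cat_path last_cat /= => /andP[_ /andP[_ pp2]] lp2 sp.
    have := L2 z p2 pp2 lp2; rewrite size_cat /= in sp; apply: contraL => /eqP ->.
    rewrite -ltnNge; lia.
have [G HG] := functional_choice (fun i g => (forall v, N i v -> g v < c.-1) /\
   forall j, acyclic_in e (fun v => N i v && (g v == j))) hcol.
suff : colorable e S' (2 * c.-1) by move/hbig; lia.
exists (fun v => 2 * G (l v) v + odd (l v)); split.
  move=> v S'v; have := (HG (l v)).1 v; rewrite /N S'v eqxx => /(_ isT).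
  have := leq_b1 (odd (l v)); lia.
move=> j cs cn ac; apply/negP => cyc.
pose P := fun v => S' v && (2 * G (l v) v + odd (l v) == j).
have Sv : forall v, P v -> S v.
  by move=> v /andP[S'v _]; apply: connect_res_start (hreach v S'v) Sr.
have cyc' : cycle (fun v w => l v <= l w) cs.
  apply: (sub_in_cycle (P := P) (e := e)) => //.
  move=> v w; rewrite !unfold_in => Pv Pw evw.
  have := L4 v w; rewrite /res (Sv v Pv) (Sv w Pw) evw => /(_ isT).
  move: Pw => /andP[S'w /eqP fw]; move=> /(_ (hreach w S'w)).
  move: Pv => /andP[_ /eqP]; rewrite -fw => fv.
  have hodd : odd (l v) = odd (l w).
    by have := congr1 odd fv; rewrite !oddD /= !addbF !addbb !addFb !oddb.
  have : l v != (l w).+1 by apply/eqP => h; move: hodd; rewrite h /=; case: (odd _).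
  lia.
rewrite cycle_all2rel in cyc'; last by move=> x y z; exact: leq_trans.
move/allrelP: cyc' => cyc'.
case: cs cn ac cyc cyc' => [//|x s] cn ac cyc cyc'.
have leq_all : forall w, w \in x :: s -> l w = l x.
  move=> w ws; apply/eqP; rewrite eqn_leq (cyc' w x ws (mem_head _ _)).
  by rewrite (cyc' x w (mem_head _ _) ws).
have [_ /(_ (G (l x) x) (x :: s) cn) hneg] := HG (l x).
apply/negP: cyc; apply: hneg.
apply/allP => w ws; have lw := leq_all w ws.
have /andP[S'w /eqP fw] := allP ac w ws.
have /andP[_ /eqP fx] := allP ac x (mem_head _ _).
rewrite /N S'w lw eqxx /=; apply/eqP; rewrite -fx lw in fw; lia.
Qed.

Lemma linked e k : irreflexive e -> 1 < k -> big e predT (4 * k - 3) ->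
  exists A : pred V, big e A k /\ forall u v, A u -> A v -> u != v ->
    connect (res e (fun z => (z == u) || (z == v) || ~~ A z)) u v.
Proof.
move=> irr k1 hb.
have [r0 [_ hC1]] := sc_lemma (ltac:(lia) : 0 < 4 * k - 3) hb.
set C1 := fun w => w \in comp e predT r0 in hC1.
have [N1 [N1C1 nN1r hN1 wN1]] : exists N : pred V, [/\ forall v, N v -> C1 v, ~~ N r0,
    big e N (2 * k - 1) &
     forall v, N v -> connect (res e (fun w => (w == v) || ~~ N w)) v r0].
  apply: (level_lemma (S := predT)) => //; first lia.
  - by move=> v; rewrite /C1 inE => /and3P[].
  - by have -> : 2 * (2 * k - 1) - 1 = 4 * k - 3 by lia.
have [t [N1t hC2]] := sc_lemma (ltac:(lia) : 0 < 2 * k - 1) hN1.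
set C2 := fun w => w \in comp e N1 t in hC2.
have C2N1 : forall w, C2 w -> N1 w by move=> w; rewrite /C2 inE => /and3P[].
have C2t : C2 t by rewrite /C2 inE N1t !connect0.
have : connect (res e predT) r0 t.
  by move: (N1C1 t N1t); rewrite /C1 inE => /and3P[].
case/connectP => p pp lp.
have [s [C2s hrs]] : exists s, C2 s /\
    connect (res e (fun z => (z == s) || ~~ C2 z)) r0 s.
  apply: (first_hit (p := p)).
  - by apply/negP => /C2N1 h; move/negP: nN1r.
  - by rewrite -lp.
  - exact: path_res_e pp.
have [M [MC2 nMs hM wM]] : exists N : pred V, [/\ forall v, N v -> C2 v, ~~ N s,
    big (rev_rel e) N k &
     forall v, N v -> connect (res (rev_rel e) (fun w => (w == v) || ~~ N w)) v s].
  apply: (level_lemma (S := N1)) => //.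
  - exact: C2N1.
  - move=> w C2w; rewrite connect_res_rev.
    move: C2s C2w; rewrite /C2 !inE => /and3P[_ _ hst] /and3P[_ htw _].
    exact: connect_trans hst htw.
  - exact: big_rev.
exists M; split; first exact: (big_rev hM).
move=> u v Mu Mv uv.
have MN1 : forall z, M z -> N1 z by move=> z /MC2 /C2N1.
apply: (connect_trans (y := r0)).
  apply: connect_res_sub (wN1 u (MN1 u Mu)) => z /orP[->//|nz].
  by apply/orP; right; apply/negP => /MN1 h; move/negP: nz.
apply: (connect_trans (y := s)).
  apply: connect_res_sub hrs => z /orP[/eqP ->|nz]; first by rewrite nMs !orbT.
  by apply/orP; right; apply/negP => /MC2 h; move/negP: nz.
have := wM v Mv; rewrite connect_res_rev; apply: connect_res_sub => z /orP[->|nz].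
  by rewrite orbT.
by rewrite nz !orbT.
Qed.
End Gen.

Lemma dichrom_big (V : finType) (E : rel V) c : dichrom_ge E c -> big E predT c.
Proof.
move=> hd k [f [hf ha]]; apply: hd.
exists (fun v => Ordinal (hf v isT)) => i cs cn ac; apply: (ha i) => //.
Qed.

Lemma big_sub (V : finType) (E : rel V) (A : pred V) k : big E A k ->
  dichrom_ge (fun x y : {x : V | A x} => E (val x) (val y)) k.
Proof.
move=> hb k' [g hg]; apply: hb.
exists (fun v => if insub v is Some w then val (g w) else 0); split.
  by move=> v Av; rewrite insubT /=.
move=> j cs cn ac; apply/negP => cyc.
have Ac : all A cs by apply: sub_all ac => v /andP[].
have [cs' ecs] := all_sigP Ac.
case: cs' ecs => [|w0 s'] ecs; first by rewrite ecs in cn.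
have fval : forall w : {x : V | A x}, (if insub (val w) is Some w' then val (g w') else 0) = val (g w).
  by move=> w; rewrite valK.
have hneg := hg (g w0) (w0 :: s') isT.
apply/negP: cyc; rewrite ecs; rewrite cycle_map; apply: hneg.
have hj : forall w, w \in w0 :: s' -> val (g w) = j.
  move=> w ws; have := allP ac (val w); rewrite ecs map_f // => /(_ isT) /andP[_].
  by rewrite fval => /eqP.
apply/allP => w ws; apply/eqP; apply: val_inj; rewrite /= (hj w ws) hj //.
exact: mem_head.
Qed.

Lemma min_exists (P : nat -> Prop) n : P n -> exists m, P m /\ forall c, P c -> m <= c.
Proof.
elim: n {-2}n (leqnn n) => [|N IH] n hn Pn.
  exists n; split=> // c _; by move: hn; rewrite leqn0 => /eqP->.
case: (classic (exists c, c < n /\ P c)) => [[c [cn Pc]]|nex].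
  apply: (IH c) => //; lia.
exists n; split=> // c Pc; case: (leqP n c) => // cn; case: nex; by exists c.
Qed.

Lemma key (VF : finType) (EF : rel VF) (u v : VF) k : loopless EF -> EF u v ->
  mad_bound (del_arc EF (u, v)) k -> mad_bound EF (4 * k - 3).
Proof.
move=> lF Fa hk.
have uv : u != v by apply/eqP => e; move: Fa; rewrite e lF.
have k2 : 1 < k.
  case: (leqP k 1) => // hk1.
  have [] := hk unit (fun _ _ => false) (fun _ => erefl).
    move=> k' [f _]; have := ltn_ord (f tt); lia.
  move=> phi [P [inj _]].
  by move: uv; rewrite (inj u v) ?eqxx //; case: (phi u); case: (phi v).
move=> V E lE hd.
have [A [bA link]] := linked lE k2 (dichrom_big hd).
have := hk {x : V | A x} (fun x y => E (val x) (val y)) (fun x => lE (val x)) (big_sub bA).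
case=> phi [P [inj [hP hdisj]]].
have hu : val (phi u) != val (phi v).
  by apply/negP => /eqP /val_inj /inj /eqP; apply/negP.
have := link _ _ (valP (phi u)) (valP (phi v)) hu.
case/connectP => p pp lp.
move: lp; case: (shortenP pp) => p' pp' up' _ lp'.
case/lastP: p' pp' up' lp' => [|Q z] pp' up' lp'.
  by move: hu; rewrite lp' /= eqxx.
rewrite last_rcons in lp'; subst z.
set Y := (fun z => _) in pp'.
have YQ : forall z, z \in Q -> ~~ A z.
  move=> z zQ; have := path_res_all pp'; rewrite all_rcons => /andP[_ /allP /(_ z zQ)].
  move: up'; rewrite /= rcons_uniq mem_rcons inE negb_or => /andP[/andP[h1 h2] /andP[h3 _]].
  have zu : z != val (phi u) by apply/eqP => e; move: h2; rewrite -e zQ.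
  have zv : z != val (phi v) by apply/eqP => e; move: h3; rewrite -e zQ.
  by rewrite /Y (negbTE zu) (negbTE zv).
exists (fun x => val (phi x)),
  (fun x y => if (x, y) == (u, v) then Q else map val (P x y)); split.
  by move=> x y /val_inj /inj.
split.
  move=> x y Exy; case: eqP => [[-> ->]|nxy].
    split.
    - exact: path_res_e pp'.
    - by move: up'; rewrite /= rcons_uniq => /andP[_ /andP[_ ->]].
    - move=> z zQ w; apply/eqP => e; move: (YQ z zQ); rewrite e; by rewrite (valP (phi w)).
  have := hP x y; rewrite /del_arc Exy /=; have -> : ((x, y) != (u, v)) by apply/eqP.
  case=> // hp hu' hz; split.
  - by rewrite -map_rcons path_map.
  - by rewrite map_inj_uniq //; exact: val_inj.
  - move=> z /mapP[z' z'P ->] w; apply/negP => /eqP /val_inj e.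
    by move: (hz z' z'P w); rewrite e eqxx.
move=> x y x' y' Exy Ex'y' neq z.
case: eqP => [exy|nxy]; case: eqP => [ex'y'|nx'y'].
- by move: neq; rewrite exy ex'y' eqxx.
- move=> zQ; apply/negP => /mapP[w _ e]; move: (YQ z zQ); by rewrite e (valP w).
- move=> /mapP[w _ ->]; apply/negP => zQ; move: (YQ _ zQ); by rewrite (valP w).
- move=> /mapP[w wP ->]; rewrite mem_map; last exact: val_inj.
  apply: (hdisj x y x' y') => //.
  + by rewrite /del_arc Exy; apply/eqP.
  + by rewrite /del_arc Ex'y'; apply/eqP.
Qed.

Theorem lemma31 (VF : finType) (EF : rel VF) (a : VF * VF) :
  loopless EF -> EF a.1 a.2 ->
  maderian (del_arc EF a) ->
  maderian EF /\
  forall m, is_mad (del_arc EF a) m ->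
    exists m', is_mad EF m' /\ m' <= 4 * m - 3.
Proof.
case: a => u v /= lF Fa [c hc]; split; first by exists (4 * c - 3); exact: key hc.
move=> m [hm _]; have hb := key lF Fa hm.
have [m' [h1 h2]] := min_exists hb.
by exists m'; split; [split | exact: h2].
Qed.
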